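(* Let $\mathsf P_1,\mathsf P_2\subseteq\mathcal G_{s,t}\times\mathbb N$ be parameterized problems with $\mathsf P_1\le_{\mathrm{LOCAL}}$ Multicolored Independent Set and $\mathsf P_2\le_{\mathrm{LOCAL}}$ Multicolored Independent Set. Then $\mathsf P_1\cup\mathsf P_2\le_{\mathrm{LOCAL}}$ Multicolored Independent Set.
   Context: LOCAL model: network = finite connected undirected graph $G$, $n=|V(G)|$, unique $O(\log n)$-bit identifiers; nodes initially know their identifier, neighbours' identifiers, input labels and the parameter; synchronous rounds, unbounded messages to neighbours, arbitrary local computation. $\mathcal G_{s,t}$: finite connected graphs with unary predicates $P_1..P_s$ and binary predicates $E_1..E_t$; a parameterized problem is $\mathsf P\subseteq\mathcal G_{s,t}\times\mathbb N$. LOCAL reductions: a LOCAL algorithm turning $(G,k)$ into $(G',k')$ ($G'$ connected), represented by $\nu:V(G')\to V(G)$ and $\eta$ mapping each $\{x,y\}\in E(G')$ to a path of $G$ between $\nu(x),\nu(y)$ (stored at the nodes; all nodes know $k'$). $\mathsf P\le_{\mathrm{LOCAL}}\mathsf Q$ if for computable $s,r,t,p$ there is such a reduction with $|V(G')|\le|V(G)|^{s(k)}$, all paths of length $\le r(k)$, $\le t(k)$ rounds, $k'\le p(k)$, and $(G,k)\in\mathsf P\iff(G',k')\in\mathsf Q$ (congestion unbounded). Multicolored Independent Set: instance $k\ge1$ and $G\in\mathcal G_{k,1}$ (binary predicate = edge relation), each vertex in at most one of $P_1..P_k$ (vertices may be uncoloured); yes iff there are pairwise non-adjacent $v_1\in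 P_1,..,v_k\in P_k$; parameter $k$. *)

(* Defs.v *)
From mathcomp Require Import all_boot.
From Stdlib Require List.
Set Implicit Arguments. Unset Strict Implicit. Unset Printing Implicit Defensive.

(* Computable functions nat -> nat: Kleene's partial recursive (mu-recursive)
   functions, with a big-step evaluation relation. *)
Inductive PRcode : Type :=
| PRzero : PRcode
| PRsucc : PRcode
| PRproj : nat -> PRcode
| PRcomp : PRcode -> list PRcode -> PRcode
| PRprec : PRcode -> PRcode -> PRcode
| PRmin  : PRcode -> PRcode.

Inductive PReval : PRcode -> list nat -> nat -> Prop :=
| PRe_zero v : PReval PRzero v 0
| PRe_succ x v : PReval PRsucc (x :: v) x.+1
| PRe_proj i v : i < size v -> PReval (PRproj i) v (nth 0 v i)
| PRe_comp f gs v ys y :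
    PRevals gs v ys -> PReval f ys y -> PReval (PRcomp f gs) v y
| PRe_prec0 f g v y : PReval f v y -> PReval (PRprec f g) (0 :: v) y
| PRe_precS f g n v r y :
    PReval (PRprec f g) (n :: v) r -> PReval g (n :: r :: v) y ->
    PReval (PRprec f g) (n.+1 :: v) y
| PRe_min f v n :
    PReval f (n :: v) 0 ->
    (forall m, m < n -> exists y, PReval f (m :: v) y.+1) ->
    PReval (PRmin f) v n
with PRevals : list PRcode -> list nat -> list nat -> Prop :=
| PRes_nil v : PRevals nil v nil
| PRes_cons g gs v y ys :
    PReval g v y -> PRevals gs v ys -> PRevals (g :: gs) v (y :: ys).

Definition computable (f : nat -> nat) : Prop :=
  exists c : PRcode, forall n, PReval c [:: n] (f n).

(* Structures of G_{s,t}: a graph (vertex set, edge relation) with unary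
   predicates P_1..P_s and binary predicates E_1..E_t. *)
Record inst (s t : nat) := Inst {
  gV : finType;
  gadj : rel gV;
  gP : 'I_s -> pred gV;
  gE : 'I_t -> rel gV
}.
Arguments gV {s t} _.
Arguments gadj {s t} _ _ _.
Arguments gP {s t} _ _ _.
Arguments gE {s t} _ _ _ _.

Definition wf_inst s t (G : inst s t) : Prop :=
  [/\ 0 < #|gV G|,
      symmetric (gadj G),
      irreflexive (gadj G),
      (forall x y : gV G, connect (gadj G) x y) &
      (forall (j : 'I_t) (x y : gV G), gE G j x y -> gadj G x y)].

Definition problem (s t : nat) := inst s t -> nat -> Prop.

Definition union_problem s t (P1 P2 : problem s t) : problem s t :=
  fun G k => P1 G k \/ P2 G k.

Definition MIS (s : nat) (G : inst s 1) (k : nat) : Prop :=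
  [/\ s = k, 1 <= k,
      (forall x : gV G, forall i j : 'I_s, gP G i x -> gP G j x -> i = j),
      (forall x y : gV G, gE G ord0 x y = gadj G x y) &
      exists f : 'I_s -> gV G,
        (forall i, gP G i (f i)) /\
        (forall i j, i != j -> ~~ gadj G (f i) (f j))].

(* Output of a node of a reduction to MIS:
   - o_k     : the new parameter k'
   - o_m     : number of vertices of G' hosted at this node (nu^{-1}(v)),
               named locally 0 .. o_m - 1
   - o_col   : colour (index of the unary predicate, if any) of hosted vertex a
   - o_edges : edges of G' stored at this node, each with its path eta. *)
Record entry := Entry {
  e_src : nat;        (* local index a of the endpoint hosted here *)
  e_tid : nat;        (* identifier of the node hosting the other endpoint *)
  e_tidx : nat;       (* local index b of the other endpoint at that node *)
  e_path : seq nat    (* identifiers of the nodes of the G-path after this node *)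
}.

Record routput := ROutput {
  o_k : nat;
  o_m : nat;
  o_col : nat -> option nat;
  o_edges : seq entry
}.

(* A LOCAL algorithm (for input structures in G_{s,t}): arbitrary state type,
   arbitrary local computation, and in each synchronous round every node sends
   its whole state (unbounded messages) to its neighbours; received messages are
   indexed by the sender's identifier. *)
Record algo (s t : nat) := Algo {
  St : Type;
  (* own id, neighbours' ids, own unary labels, binary labels E_j(v,w) and
     E_j(w,v) towards neighbour w (by id), parameter k *)
  a_init : nat -> (nat -> bool) -> ('I_s -> bool) ->
           ('I_t -> nat -> bool) -> ('I_t -> nat -> bool) -> nat -> St;
  a_step : St -> (nat -> option St) -> St;
  a_out : St -> routput
}.
Arguments St {s t} _.
Arguments a_init {s t} _ _ _ _ _ _ _.
Arguments a_step {s t} _ _ _.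
Arguments a_out {s t} _ _.

Section Run.
Variables (s t : nat) (A : algo s t) (G : inst s t) (id : gV G -> nat) (k : nat).

Definition init_state (v : gV G) : St A :=
  a_init A (id v)
    (fun i => [exists w, gadj G v w && (id w == i)])
    (fun j => gP G j v)
    (fun j i => [exists w, [&& gadj G v w, id w == i & gE G j v w]])
    (fun j i => [exists w, [&& gadj G v w, id w == i & gE G j w v]])
    k.

Fixpoint run (r : nat) : gV G -> St A :=
  match r with
  | 0 => init_state
  | r'.+1 => fun v =>
      a_step A (run r' v)
        (fun i => if [pick w | gadj G v w && (id w == i)] is Some w
                  then Some (run r' w) else None)
  end.
End Run.
Arguments init_state {s t} A G id k v.
Arguments run {s t} A G id k r _.

(* The graph G' defined by the outputs: V(G') = { (v,a) | a < o_m v },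
   nu (v,a) = v; {x,y} in E(G') iff an entry for it is stored at nu x or nu y. *)
Section Target.
Variables (s t : nat) (G : inst s t) (id : gV G -> nat) (o : gV G -> routput).

Definition tV : finType := {v : gV G & 'I_(o_m (o v))}.

Definition entry_for (x y : tV) (e : entry) : bool :=
  [&& e_src e == val (tagged x), e_tid e == id (tag y) & e_tidx e == val (tagged y)].

Definition tadj : rel tV :=
  fun x y => has (entry_for x y) (o_edges (o (tag x)))
          || has (entry_for y x) (o_edges (o (tag y))).

Definition target (k' : nat) : inst k' 1 :=
  @Inst k' 1 tV tadj
    (fun i x => o_col (o (tag x)) (val (tagged x)) == Some (val i))
    (fun _ => tadj).

Definition entry_valid (r : nat) (v : gV G) (e : entry) : Prop :=
  e_src e < o_m (o v) /\
  exists w : gV G,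
    [/\ id w = e_tid e, e_tidx e < o_m (o w) &
        exists ps : seq (gV G),
          [/\ map id ps = e_path e, path (gadj G) v ps, last v ps = w &
              size ps <= r]].
End Target.
Arguments tV {s t} G o.
Arguments entry_for {s t} G id o x y e.
Arguments tadj {s t} G id o x y.
Arguments target {s t} G id o k'.
Arguments entry_valid {s t} G id o r v e.

(* P <=_LOCAL MIS, for identifiers of O(log n) bits, i.e. unique identifiers
   in [0, n^c) for the fixed model constant c. *)
Definition local_reduces_to_MIS (c s t : nat) (P : problem s t) : Prop :=
  exists fs fr ft fp : nat -> nat,
  [/\ computable fs, computable fr, computable ft, computable fp &
  exists A : algo s t,
  forall (G : inst s t) (k : nat) (id : gV G -> nat),
    wf_inst G -> injective id -> (forall v, id v < #|gV G| ^ c) ->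
    let o := fun v => a_out A (run A G id k (ft k) v) in
    exists k' : nat,
      [/\ (forall v, o_k (o v) = k'),
          1 <= k' <= fp k,
          (forall v a i, a < o_m (o v) -> o_col (o v) a = Some i -> i < k'),
          (forall v e, List.In e (o_edges (o v)) -> entry_valid G id o (fr k) v e) &
       [/\ wf_inst (target G id o k'),
          #|tV G o| <= #|gV G| ^ fs k &
          (P G k <-> MIS (target G id o k') k')]]].

(* Main.v *)
From HB Require Import structures.
From Stdlib Require Import ClassicalEpsilon FunctionalExtensionality.
Require Import Defs.
From mathcomp Require Import all_boot zify.
Set Implicit Arguments. Unset Strict Implicit. Unset Printing Implicit Defensive.

Definition entry2tup (e : entry) := (e_src e, e_tid e, e_tidx e, e_path e).
Definition tup2entry (p : nat * nat * nat * seq nat) :=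
  let: (a, b, c, d) := p in Entry a b c d.
Lemma entryK : cancel entry2tup tup2entry. Proof. by case. Qed.
HB.instance Definition _ := Equality.copy entry (can_type entryK).

Lemma InP (T : eqType) (x : T) s : List.In x s <-> x \in s.
Proof.
elim: s => [|y s IH] //=; rewrite in_cons; split.
- by case=> [->|/IH ->]; rewrite ?eqxx ?orbT.
- by case/orP=> [/eqP->|/IH]; [left|right].
Qed.

Definition enum_true (f : nat -> bool) : seq nat :=
  match excluded_middle_informative (exists s : seq nat, forall i, f i = (i \in s)) with
  | left H => proj1_sig (constructive_indefinite_description _ H)
  | right _ => [::]
  end.

Lemma enum_trueP f (s : seq nat) : (forall i, f i = (i \in s)) -> forall i, f i = (i \in enum_true f).
Proof.
move=> Hs; rewrite /enum_true; case: excluded_middle_informative => [H|[]]; last by exists s.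
by case: constructive_indefinite_description.
Qed.

Definition addc := PRprec (PRproj 0) (PRcomp PRsucc [:: PRproj 1]).
Lemma addcP n m : PReval addc [:: n; m] (n + m).
Proof.
elim: n => [|n IH].
  by apply: PRe_prec0; exact: (@PRe_proj 0 [:: m]).
apply: (PRe_precS IH).
apply: (@PRe_comp _ _ _ [:: n + m]); last exact: PRe_succ.
apply: PRes_cons; last exact: PRes_nil.
exact: (@PRe_proj 1 [:: n; n + m; m]).
Qed.
Definition mulc := PRprec PRzero (PRcomp addc [:: PRproj 1; PRproj 2]).
Lemma mulcP n m : PReval mulc [:: n; m] (n * m).
Proof.
elim: n => [|n IH].
  by apply: PRe_prec0; exact: PRe_zero.
apply: (PRe_precS IH).
apply: (@PRe_comp _ _ _ [:: n * m; m]); last by rewrite mulSn addnC; exact: addcP.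
apply: PRes_cons; first exact: (@PRe_proj 1 [:: n; n * m; m]).
apply: PRes_cons; last exact: PRes_nil.
exact: (@PRe_proj 2 [:: n; n * m; m]).
Qed.

Lemma comp_bin c (op : nat -> nat -> nat) f g :
  (forall n m, PReval c [:: n; m] (op n m)) ->
  computable f -> computable g -> computable (fun n => op (f n) (g n)).
Proof.
move=> Hc [cf Hf] [cg Hg]; exists (PRcomp c [:: cf; cg]) => n.
apply: (@PRe_comp _ _ _ [:: f n; g n]); last exact: Hc.
by apply: PRes_cons => //; apply: PRes_cons => //; apply: PRes_nil.
Qed.
Lemma comp_add f g : computable f -> computable g -> computable (fun n => f n + g n).
Proof. exact: comp_bin addcP. Qed.
Lemma comp_mul f g : computable f -> computable g -> computable (fun n => f n * g n).
Proof. exact: comp_bin mulcP. Qed.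
Lemma comp_const c : computable (fun _ => c).
Proof.
elim: c => [|c [cc Hc]]; first by exists PRzero => n; apply: PRe_zero.
exists (PRcomp PRsucc [:: cc]) => n.
apply: (@PRe_comp _ _ _ [:: c]); last exact: PRe_succ.
by apply: PRes_cons => //; apply: PRes_nil.
Qed.

Section Comb.
Variables (s t : nat) (A1 A2 : algo s t) (ft1 ft2 : nat -> nat)
  (comb : nat -> seq nat -> routput -> routput -> routput).

Record cst := CSt { c_id : nat; c_nb : seq nat; c_k : nat; c_r : nat;
  c_s1 : St A1; c_s2 : St A2 }.

Definition calgo : algo s t :=
  @Algo s t cst
    (fun idv nb lp le1 le2 k =>
       CSt idv (enum_true nb) k 0 (a_init A1 idv nb lp le1 le2 k) (a_init A2 idv nb lp le1 le2 k))
    (fun st msg =>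
       CSt (c_id st) (c_nb st) (c_k st) (c_r st).+1
         (if c_r st < ft1 (c_k st) then a_step A1 (c_s1 st) (fun i => omap c_s1 (msg i)) else c_s1 st)
         (if c_r st < ft2 (c_k st) then a_step A2 (c_s2 st) (fun i => omap c_s2 (msg i)) else c_s2 st))
    (fun st => comb (c_id st) (c_nb st) (a_out A1 (c_s1 st)) (a_out A2 (c_s2 st))).

Variables (G : inst s t) (id : gV G -> nat) (k : nat).
Definition nbr (v : gV G) (i : nat) := [exists w, gadj G v w && (id w == i)].

Lemma run_calgo r v :
  [/\ c_id (run calgo G id k r v) = id v, c_nb (run calgo G id k r v) = enum_true (nbr v),
      c_k (run calgo G id k r v) = k, c_r (run calgo G id k r v) = r &
      c_s1 (run calgo G id k r v) = run A1 G id k (minn r (ft1 k)) v /\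
      c_s2 (run calgo G id k r v) = run A2 G id k (minn r (ft2 k)) v].
Proof.
elim: r v => [|r IH] v; first by rewrite !min0n.
have IHf := fun w => IH w.
rewrite /=; case: (IH v) => -> -> -> -> [-> ->]; split => //; split.
- case: ltnP => Hr.
  + rewrite (minn_idPl Hr) /=; congr (a_step A1 _ _).
    apply: functional_extensionality => i; case: pickP => [w _|_] //=.
    by case: (IH w) => _ _ _ _ [-> _]; rewrite (minn_idPl (ltnW Hr)).
  + by rewrite (minn_idPr (leqW Hr)).
- case: ltnP => Hr.
  + rewrite (minn_idPl Hr) /=; congr (a_step A2 _ _).
    apply: functional_extensionality => i; case: pickP => [w _|_] //=.
    by case: (IH w) => _ _ _ _ [_ ->]; rewrite (minn_idPl (ltnW Hr)).
  + by rewrite (minn_idPr (leqW Hr)).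
Qed.

Lemma out_calgo v :
  a_out calgo (run calgo G id k (ft1 k + ft2 k) v) =
  comb (id v) (enum_true (nbr v)) (a_out A1 (run A1 G id k (ft1 k) v))
       (a_out A2 (run A2 G id k (ft2 k) v)).
Proof.
case: (run_calgo (ft1 k + ft2 k) v) => /= -> -> _ _ [-> ->].
by rewrite (minn_idPr (leq_addr _ _)) (minn_idPr (leq_addl _ _)).
Qed.
End Comb.

Definition yes1 (d : routput) : bool := (o_k d == 1) && (o_col d 0 == Some 0).
Definition encS L a j := 2 * (a * L + j) + 1.
Definition encT L b i := 2 * (b * L + i) + 2.
Definition Lof d1 d2 := o_k d1 + o_k d2.
Definition mof d1 d2 := 2 * ((o_m d1 + o_m d2) * Lof d1 d2).

Definition ccol (d1 d2 : routput) (x : nat) : option nat :=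
  let k1 := o_k d1 in let k2 := o_k d2 in let L := Lof d1 d2 in
  match x with
  | 0 => None
  | y.+1 =>
    let q := y %/ 2 in let a := q %/ L in let j := q %% L in
    if y %% 2 == 0 then
      (if (a < o_m d1) && (j < k2) then omap (fun i => i * k2 + j) (o_col d1 a) else None)
    else (if (a < o_m d2) && (j < k1) then omap (fun jj => j * k2 + jj) (o_col d2 a) else None)
  end.

Definition cp1 L k (e : entry) :=
  [seq Entry (encS L (e_src e) p.1) (e_tid e) (encS L (e_tidx e) p.2) (e_path e)
  | p <- [seq (j, j') | j <- iota 0 k, j' <- iota 0 k]].
Definition cp2 L k (e : entry) :=
  [seq Entry (encT L (e_src e) p.1) (e_tid e) (encT L (e_tidx e) p.2) (e_path e)
  | p <- [seq (j, j') | j <- iota 0 k, j' <- iota 0 k]].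

Definition cedges idv nb d1 d2 :=
  [seq Entry 0 u 0 [:: u] | u <- nb] ++ [seq Entry 0 idv x [::] | x <- iota 1 (mof d1 d2)] ++
  flatten [seq cp1 (Lof d1 d2) (o_k d2) e | e <- o_edges d1] ++
  flatten [seq cp2 (Lof d1 d2) (o_k d1) e | e <- o_edges d2].

Definition comb idv nb d1 d2 :=
  if nb == [::] then ROutput 1 1 (fun _ => if yes1 d1 || yes1 d2 then Some 0 else None) [::]
  else ROutput (o_k d1 * o_k d2) (mof d1 d2).+1 (ccol d1 d2) (cedges idv nb d1 d2).

Definition hasE (E : seq entry) X U Y :=
  has (fun e => [&& e_src e == X, e_tid e == U & e_tidx e == Y]) E.

Lemma encS_inj L a j a' j' : j < L -> j' < L -> encS L a j = encS L a' j' -> a = a' /\ j = j'.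
Proof.
rewrite /encS => hj hj' E.
have E2 : a * L + j = a' * L + j' by lia.
have L0 : 0 < L by lia.
have Ej : j = j'.
  have h1 : (a * L + j) %% L = j by rewrite modnMDl modn_small.
  have h2 : (a' * L + j') %% L = j' by rewrite modnMDl modn_small.
  by rewrite -h1 -h2 E2.
split => //; subst j'.
by move: E2 => /eqP; rewrite eqn_add2r eqn_mul2r gtn_eqF //= => /eqP.
Qed.

Lemma encT_inj L a j a' j' : j < L -> j' < L -> encT L a j = encT L a' j' -> a = a' /\ j = j'.
Proof.
move=> hj hj' E; apply: (encS_inj hj hj'); move: E; rewrite /encS /encT; lia.
Qed.

Lemma encST L a j b i : encS L a j <> encT L b i.
Proof. rewrite /encS /encT; lia. Qed.

Lemma ccolS d1 d2 a j : j < Lof d1 d2 ->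
  ccol d1 d2 (encS (Lof d1 d2) a j) =
  if (a < o_m d1) && (j < o_k d2) then omap (fun i => i * o_k d2 + j) (o_col d1 a) else None.
Proof.
move=> hj; have L0 : 0 < Lof d1 d2 by lia.
rewrite /ccol /encS addn1 /=.
rewrite modnMr eqxx mulKn // divnMDl // divn_small // addn0 modnMDl modn_small //.
Qed.

Lemma ccolT d1 d2 b i : i < Lof d1 d2 ->
  ccol d1 d2 (encT (Lof d1 d2) b i) =
  if (b < o_m d2) && (i < o_k d1) then omap (fun jj => i * o_k d2 + jj) (o_col d2 b) else None.
Proof.
move=> hi; have L0 : 0 < Lof d1 d2 by lia.
rewrite /ccol /encT.
have -> : 2 * (b * Lof d1 d2 + i) + 2 = (2 * (b * Lof d1 d2 + i) + 1).+1 by lia.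
rewrite /=.
have -> : (2 * (b * Lof d1 d2 + i) + 1) %% 2 = 1 by rewrite mulnC modnMDl.
have -> : (2 * (b * Lof d1 d2 + i) + 1) %/ 2 = b * Lof d1 d2 + i.
  by rewrite mulnC divnMDl // divn_small // addn0.
by rewrite divnMDl // divn_small // addn0 modnMDl modn_small.
Qed.

Lemma decode L x : 0 < L ->
  x = 0 \/ (exists a j, j < L /\ x = encS L a j) \/ (exists b i, i < L /\ x = encT L b i).
Proof.
move=> L0; case: x => [|y]; [by left | right].
have hy := divn_eq y 2; have hq := divn_eq (y %/ 2) L.
have hm : y %% 2 < 2 by rewrite ltn_mod.
have hj : (y %/ 2) %% L < L by rewrite ltn_mod.
case: (y %% 2) hy hm => [|[|//]] hy _.
- left; exists ((y %/ 2) %/ L), ((y %/ 2) %% L); split => //; rewrite /encS; lia.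
- right; exists ((y %/ 2) %/ L), ((y %/ 2) %% L); split => //; rewrite /encT; lia.
Qed.

Lemma mem_cedges idv nb d1 d2 e : e \in cedges idv nb d1 d2 ->
  [\/ exists2 u, u \in nb & e = Entry 0 u 0 [:: u],
      exists x, 0 < x <= mof d1 d2 /\ e = Entry 0 idv x [::],
      exists e1 j j', [/\ e1 \in o_edges d1, j < o_k d2, j' < o_k d2 &
        e = Entry (encS (Lof d1 d2) (e_src e1) j) (e_tid e1) (encS (Lof d1 d2) (e_tidx e1) j') (e_path e1)] |
      exists e1 j j', [/\ e1 \in o_edges d2, j < o_k d1, j' < o_k d1 &
        e = Entry (encT (Lof d1 d2) (e_src e1) j) (e_tid e1) (encT (Lof d1 d2) (e_tidx e1) j') (e_path e1)]].
Proof.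
rewrite /cedges !mem_cat => /or4P [/mapP[u hu ->]|/mapP[x hx ->]|/flatten_mapP[e1 he1]|/flatten_mapP[e1 he1]].
- by apply: Or41; exists u.
- by apply: Or42; exists x; split => //; move: hx; rewrite mem_iota; lia.
- case/mapP => [[j j']] /allpairsP [[j1 j2] [/= hj1 hj2 [-> ->]]] ->.
  by apply: Or43; exists e1, j1, j2; move: hj1 hj2; rewrite !mem_iota.
- case/mapP => [[j j']] /allpairsP [[j1 j2] [/= hj1 hj2 [-> ->]]] ->.
  by apply: Or44; exists e1, j1, j2; move: hj1 hj2; rewrite !mem_iota.
Qed.

Lemma hasE_S idv nb d1 d2 a j a' j' U : j < o_k d2 -> j' < o_k d2 ->
  hasE (cedges idv nb d1 d2) (encS (Lof d1 d2) a j) U (encS (Lof d1 d2) a' j')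
  = hasE (o_edges d1) a U a'.
Proof.
move=> hj hj'; have hL : o_k d2 <= Lof d1 d2 by rewrite /Lof leq_addl.
apply/hasP/hasP.
- case=> e /mem_cedges [[u _ ->]|[x [_ ->]]|[e1 [j1 [j2 [he1 h1 h2 ->]]]]|[e1 [j1 [j2 [he1 h1 h2 ->]]]]] /=.
  + by rewrite /encS addn1.
  + by rewrite /encS addn1.
  + case/and3P => /eqP/encS_inj E1 /eqP E2 /eqP/encS_inj E3.
    case: (E1 (leq_trans h1 hL) (leq_trans hj hL)) => E4 _.
    case: (E3 (leq_trans h2 hL) (leq_trans hj' hL)) => E5 _.
    by exists e1 => //; rewrite E2 E4 E5 !eqxx.
  + by case/and3P => /eqP E1; exfalso; exact: (encST (esym E1)).
- case=> e1 he1 /and3P [/eqP E1 /eqP E2 /eqP E3].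
  exists (Entry (encS (Lof d1 d2) (e_src e1) j) (e_tid e1) (encS (Lof d1 d2) (e_tidx e1) j') (e_path e1));
    last by rewrite /= E1 E2 E3 !eqxx.
  rewrite /cedges !mem_cat; apply/or4P; apply: Or43.
  apply/flatten_mapP; exists e1 => //; apply/mapP; exists (j, j') => //.
  by apply/allpairsP; exists (j, j'); rewrite !mem_iota /=; split => //; lia.
Qed.

Lemma hasE_T idv nb d1 d2 a j a' j' U : j < o_k d1 -> j' < o_k d1 ->
  hasE (cedges idv nb d1 d2) (encT (Lof d1 d2) a j) U (encT (Lof d1 d2) a' j')
  = hasE (o_edges d2) a U a'.
Proof.
move=> hj hj'; have hL : o_k d1 <= Lof d1 d2 by rewrite /Lof leq_addr.
apply/hasP/hasP.
- case=> e /mem_cedges [[u _ ->]|[x [_ ->]]|[e1 [j1 [j2 [he1 h1 h2 ->]]]]|[e1 [j1 [j2 [he1 h1 h2 ->]]]]] /=.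
  + by rewrite /encT addn2.
  + by rewrite /encT addn2.
  + by case/and3P => /eqP E1; exfalso; exact: (encST E1).
  + case/and3P => /eqP/encT_inj E1 /eqP E2 /eqP/encT_inj E3.
    case: (E1 (leq_trans h1 hL) (leq_trans hj hL)) => E4 _.
    case: (E3 (leq_trans h2 hL) (leq_trans hj' hL)) => E5 _.
    by exists e1 => //; rewrite E2 E4 E5 !eqxx.
- case=> e1 he1 /and3P [/eqP E1 /eqP E2 /eqP E3].
  exists (Entry (encT (Lof d1 d2) (e_src e1) j) (e_tid e1) (encT (Lof d1 d2) (e_tidx e1) j') (e_path e1));
    last by rewrite /= E1 E2 E3 !eqxx.
  rewrite /cedges !mem_cat; apply/or4P; apply: Or44.
  apply/flatten_mapP; exists e1 => //; apply/mapP; exists (j, j') => //.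
  by apply/allpairsP; exists (j, j'); rewrite !mem_iota /=; split => //; lia.
Qed.

Lemma hasE_refl idv nb d1 d2 X : 0 < o_k d1 ->
  hasE (cedges idv nb d1 d2) X idv X ->
  [\/ idv \in nb, exists a, hasE (o_edges d1) a idv a | exists b, hasE (o_edges d2) b idv b].
Proof.
move=> k1p; have hL1 : o_k d1 <= Lof d1 d2 by rewrite /Lof leq_addr.
have hL2 : o_k d2 <= Lof d1 d2 by rewrite /Lof leq_addl.
case/hasP => e /mem_cedges [[u hu ->]|[x [hx ->]]|[e1 [j1 [j2 [he1 h1 h2 ->]]]]|[e1 [j1 [j2 [he1 h1 h2 ->]]]]] /=.
- by case/and3P => _ /eqP Eu _; apply: Or31; rewrite -Eu.
- by case/and3P => /eqP <- _ /eqP hx0; move: hx; rewrite hx0.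
- case/and3P => /eqP <- /eqP E2 /eqP/encS_inj E3.
  case: (E3 (leq_trans h2 hL2) (leq_trans h1 hL2)) => E4 _.
  by apply: Or32; exists (e_src e1); apply/hasP; exists e1 => //; rewrite E2 E4 !eqxx.
- case/and3P => /eqP <- /eqP E2 /eqP/encT_inj E3.
  case: (E3 (leq_trans h2 hL1) (leq_trans h1 hL1)) => E4 _.
  by apply: Or33; exists (e_src e1); apply/hasP; exists e1 => //; rewrite E2 E4 !eqxx.
Qed.

Lemma hasE_zo idv nb d1 d2 x : 0 < x <= mof d1 d2 -> hasE (cedges idv nb d1 d2) 0 idv x.
Proof.
move=> hx; apply/hasP; exists (Entry 0 idv x [::]); last by rewrite /= !eqxx.
rewrite /cedges !mem_cat; apply/or4P; apply: Or42; apply/mapP; exists x => //.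
by rewrite mem_iota; lia.
Qed.

Lemma hasE_zn idv nb d1 d2 u : u \in nb -> hasE (cedges idv nb d1 d2) 0 u 0.
Proof.
move=> hu; apply/hasP; exists (Entry 0 u 0 [:: u]); last by rewrite /= !eqxx.
by rewrite /cedges !mem_cat; apply/or4P; apply: Or41; apply/mapP; exists u.
Qed.

Section Gen.
Variables (s t : nat) (G : inst s t) (id : gV G -> nat).

Lemma tadjE (o : gV G -> routput) (x y : tV G o) :
  tadj G id o x y = hasE (o_edges (o (tag x))) (tagged x) (id (tag y)) (tagged y)
                 || hasE (o_edges (o (tag y))) (tagged y) (id (tag x)) (tagged x).
Proof. by []. Qed.

Lemma MIS_target (o : gV G -> routput) k' :
  MIS (target G id o k') k' <->
  (1 <= k' /\ exists f : 'I_k' -> tV G o,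
     (forall i, o_col (o (tag (f i))) (tagged (f i)) == Some (val i)) /\
     (forall i j, i != j -> ~~ tadj G id o (f i) (f j))).
Proof.
split.
- by case=> _ hk _ _ [f [h1 h2]]; split => //; exists f.
- case=> hk [f [h1 h2]]; split => //.
  + by move=> x i j /= /eqP -> /eqP [] /val_inj.
  + by exists f.
Qed.

Lemma card_tV (o : gV G -> routput) : #|tV G o| = \sum_(v : gV G) o_m (o v).
Proof.
rewrite /tV card_tagged sumnE big_map big_enum /=.
by apply: eq_bigr => v _; rewrite card_ord.
Qed.

Lemma nblP v u : (u \in enum_true (@nbr _ _ G id v)) = [exists w, gadj G v w && (id w == u)].
Proof.
rewrite -(@enum_trueP (@nbr _ _ G id v) [seq id w | w <- enum (gadj G v)]) //.
move=> i; rewrite /nbr; apply/existsP/mapP.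
- by case=> w /andP [hw /eqP <-]; exists w => //; rewrite mem_enum.
- by case=> w; rewrite mem_enum => hw ->; exists w; rewrite eqxx andbT; exact: hw.
Qed.

Lemma nbl_nil v : (enum_true (@nbr _ _ G id v) == [::]) = ~~ [exists w, gadj G v w].
Proof.
case: (enum_true _) (nblP v) => [|u us] /= H.
  by apply/esym/negP => /existsP [w hw]; move: (H (id w)); rewrite in_nil; move/esym/existsP; apply; exists w; rewrite hw eqxx.
move: (H u); rewrite in_cons eqxx /= => /esym/existsP [w /andP [hw _]].
suff -> : [exists w, gadj G v w] by []. by apply/existsP; exists w.
Qed.

Lemma has_nbr v : wf_inst G -> 1 < #|gV G| -> exists w, gadj G v w.
Proof.
case=> _ _ irr conn _ hn.
have [w hw] : exists w, w != v.
  case: (pickP (fun w => w != v)) => [w hw|H]; first by exists w.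
  have : #|gV G| <= 1.
    apply/fintype_le1P => x y; move: (H x) (H y) => /negbFE/eqP -> /negbFE/eqP ->; done.
  by rewrite leqNgt hn.
case/connectP: (conn v w) => p.
case: p => [_ /= E|x p /= /andP [hx _] _]; last by exists x.
by move: hw; rewrite E eqxx.
Qed.

Lemma no_nbr v : wf_inst G -> #|gV G| <= 1 -> ~~ [exists w, gadj G v w].
Proof.
case=> _ _ irr _ _ hn; apply/existsP => [[w hw]].
by move/fintype_le1P: hn => H; move: hw; rewrite -(H v w) irr.
Qed.
End Gen.

Lemma encS_lt L a j m1 m2 : a < m1 -> j < L -> encS L a j < (2 * ((m1 + m2) * L)).+1.
Proof. rewrite /encS => h1 h2. nia. Qed.
Lemma encT_lt L a j m1 m2 : a < m2 -> j < L -> encT L a j < (2 * ((m1 + m2) * L)).+1.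
Proof. rewrite /encT => h1 h2. nia. Qed.
Lemma mulD_lt k1 k2 i j : i < k1 -> j < k2 -> i * k2 + j < k1 * k2.
Proof. move=> h1 h2. nia. Qed.
Lemma mulD_inj k2 i j i' j' : j < k2 -> j' < k2 -> i * k2 + j = i' * k2 + j' -> i = i' /\ j = j'.
Proof.
move=> hj hj' E.
have Ej : j = j'.
  have h1 : (i * k2 + j) %% k2 = j by rewrite modnMDl modn_small.
  have h2 : (i' * k2 + j') %% k2 = j' by rewrite modnMDl modn_small.
  by rewrite -h1 -h2 E.
split => //; subst j'.
by move: E => /eqP; rewrite eqn_add2r eqn_mul2r gtn_eqF /= ?(leq_ltn_trans _ hj) // => /eqP.
Qed.

Section Multi.
Variables (s t : nat) (G : inst s t) (id : gV G -> nat) (o1 o2 : gV G -> routput)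
  (k1 k2 r1 r2 : nat).
Hypotheses (wfG : wf_inst G) (injid : injective id) (Hn : 1 < #|gV G|)
  (Hk1 : forall v, o_k (o1 v) = k1) (k1p : 0 < k1)
  (Hc1 : forall v a i, a < o_m (o1 v) -> o_col (o1 v) a = Some i -> i < k1)
  (Hv1 : forall v e, List.In e (o_edges (o1 v)) -> entry_valid G id o1 r1 v e)
  (Hw1 : wf_inst (target G id o1 k1))
  (Hk2 : forall v, o_k (o2 v) = k2) (k2p : 0 < k2)
  (Hc2 : forall v a i, a < o_m (o2 v) -> o_col (o2 v) a = Some i -> i < k2)
  (Hv2 : forall v e, List.In e (o_edges (o2 v)) -> entry_valid G id o2 r2 v e)
  (Hw2 : wf_inst (target G id o2 k2)).

Definition oc v := comb (id v) (enum_true (@nbr _ _ G id v)) (o1 v) (o2 v).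
Local Notation L := (k1 + k2).

Lemma nbl_ne v : (enum_true (@nbr _ _ G id v) == [::]) = false.
Proof.
rewrite nbl_nil; case: (has_nbr v wfG Hn) => w hw.
by apply/negbF/existsP; exists w.
Qed.

Lemma Hm v : o_m (oc v) = (mof (o1 v) (o2 v)).+1.
Proof. by rewrite /oc /comb nbl_ne. Qed.
Lemma Hcol v : o_col (oc v) = ccol (o1 v) (o2 v).
Proof. by rewrite /oc /comb nbl_ne. Qed.
Lemma Hed v : o_edges (oc v) = cedges (id v) (enum_true (@nbr _ _ G id v)) (o1 v) (o2 v).
Proof. by rewrite /oc /comb nbl_ne. Qed.
Lemma Hk v : o_k (oc v) = k1 * k2.
Proof. by rewrite /oc /comb nbl_ne /= Hk1 Hk2. Qed.
Lemma HL v : Lof (o1 v) (o2 v) = L.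
Proof. by rewrite /Lof Hk1 Hk2. Qed.
Lemma Hmof v : mof (o1 v) (o2 v) = 2 * ((o_m (o1 v) + o_m (o2 v)) * L).
Proof. by rewrite /mof HL. Qed.

Lemma hasES v a j a' j' U : j < k2 -> j' < k2 ->
  hasE (o_edges (oc v)) (encS L a j) U (encS L a' j') = hasE (o_edges (o1 v)) a U a'.
Proof. by move=> hj hj'; rewrite Hed -(HL v) hasE_S // Hk2. Qed.
Lemma hasET v a j a' j' U : j < k1 -> j' < k1 ->
  hasE (o_edges (oc v)) (encT L a j) U (encT L a' j') = hasE (o_edges (o2 v)) a U a'.
Proof. by move=> hj hj'; rewrite Hed -(HL v) hasE_T // Hk1. Qed.

Lemma tadjS (x y : tV G oc) (x1 y1 : tV G o1) j j' : j < k2 -> j' < k2 ->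
  tag x = tag x1 -> tag y = tag y1 ->
  val (tagged x) = encS L (tagged x1) j -> val (tagged y) = encS L (tagged y1) j' ->
  tadj G id oc x y = tadj G id o1 x1 y1.
Proof.
move=> hj hj' Tx Ty Ex Ey; rewrite !tadjE Ex Ey Tx Ty !hasES //.
Qed.

Lemma tadjT (x y : tV G oc) (x1 y1 : tV G o2) j j' : j < k1 -> j' < k1 ->
  tag x = tag x1 -> tag y = tag y1 ->
  val (tagged x) = encT L (tagged x1) j -> val (tagged y) = encT L (tagged y1) j' ->
  tadj G id oc x y = tadj G id o2 x1 y1.
Proof.
move=> hj hj' Tx Ty Ex Ey; rewrite !tadjE Ex Ey Tx Ty !hasET //.
Qed.

Lemma tadj_irr : irreflexive (tadj G id oc).
Proof.
move=> [v X]; have k1p' : 0 < o_k (o1 v) by rewrite Hk1.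
rewrite tadjE orbb /= Hed; apply/negP => /(hasE_refl k1p').
case=> [|[a /hasP [e he /and3P [/eqP E1 /eqP E2 /eqP E3]]]|[a /hasP [e he /and3P [/eqP E1 /eqP E2 /eqP E3]]]].
- rewrite nblP => /existsP [w /andP [hw /eqP /injid E]].
  by move: hw; rewrite E; case: wfG => _ _ irr _ _; rewrite irr.
- case: (Hv1 (proj2 (InP _ _) he)) => ha _.
  case: Hw1 => _ _ irr _ _.
  move: (irr (existT (fun v => 'I_(o_m (o1 v))) v (Ordinal ha))).
  by rewrite /= tadjE /= orbb; move/negbT/negP; apply; apply/hasP; exists e => //; rewrite E1 E2 E3 !eqxx.
- case: (Hv2 (proj2 (InP _ _) he)) => ha _.
  case: Hw2 => _ _ irr _ _.
  move: (irr (existT (fun v => 'I_(o_m (o2 v))) v (Ordinal ha))).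
  by rewrite /= tadjE /= orbb; move/negbT/negP; apply; apply/hasP; exists e => //; rewrite E1 E2 E3 !eqxx.
Qed.

Lemma tadj_sym : symmetric (tadj G id oc).
Proof. by move=> x y; rewrite !tadjE orbC. Qed.

Lemma Hm0 v : 0 < o_m (oc v). Proof. by rewrite Hm. Qed.
Definition zv v : tV G oc := existT (fun v => 'I_(o_m (oc v))) v (Ordinal (Hm0 v)).

Lemma z_adj (x : tV G oc) : zv (tag x) = x \/ tadj G id oc (zv (tag x)) x.
Proof.
case: x => v X; case: (posnP X) => hX.
  by left; congr existT; apply: val_inj.
right; rewrite tadjE /= Hed; apply/orP; left; apply: hasE_zo.
by rewrite hX -ltnS -Hm ltn_ord.
Qed.

Lemma zz_adj v w : gadj G v w -> tadj G id oc (zv v) (zv w).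
Proof.
move=> hvw; rewrite tadjE /= Hed; apply/orP; left; apply: hasE_zn.
by rewrite nblP; apply/existsP; exists w; rewrite hvw eqxx.
Qed.

Lemma zz_conn v w : connect (tadj G id oc) (zv v) (zv w).
Proof.
case: wfG => _ _ _ conn _.
case/connectP: (conn v w) => p; elim: p v => [|x p IH] v /=; first by move=> _ ->.
case/andP => hx hp hl; apply: connect_trans (IH x hp hl).
exact/connect1/zz_adj.
Qed.

Lemma tconn (x y : tV G oc) : connect (tadj G id oc) x y.
Proof.
apply: (@connect_trans _ _ (zv (tag x))).
  case: (z_adj x) => [->|h]; first exact: connect0.
  by apply: connect1; rewrite tadj_sym.
apply: (connect_trans (zz_conn _ (tag y))).
by case: (z_adj y) => [->|h]; [exact: connect0 | exact: connect1].
Qed.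

Lemma wf_oc : wf_inst (target G id oc (k1 * k2)).
Proof.
split => //.
- case: wfG => hn _ _ _ _; rewrite card_tV.
  case/card_gt0P: hn => v _; rewrite (bigD1 v) //= Hm; lia.
- exact: tadj_sym.
- exact: tadj_irr.
- exact: tconn.
Qed.

Lemma decode_col v X c : o_col (oc v) X = Some c ->
  (exists a j i, [/\ X = encS L a j, a < o_m (o1 v), j < k2, o_col (o1 v) a = Some i & c = i * k2 + j]) \/
  (exists b i jj, [/\ X = encT L b i, b < o_m (o2 v), i < k1, o_col (o2 v) b = Some jj & c = i * k2 + jj]).
Proof.
rewrite Hcol; case: (@decode L X (ltn_addr _ k1p)) => [->|[[a [j [hj ->]]]|[b [i [hi ->]]]]] //.
- rewrite -(HL v) ccolS ?HL // Hk2; case: ifP => // /andP [ha hj2].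
  by case E: (o_col (o1 v) a) => [i|] //= [<-]; left; exists a, j, i; split.
- rewrite -(HL v) ccolT ?HL // Hk1 Hk2; case: ifP => // /andP [hb hi2].
  by case E: (o_col (o2 v) b) => [jj|] //= [<-]; right; exists b, i, jj; split.
Qed.

Lemma col_oc v a i : a < o_m (oc v) -> o_col (oc v) a = Some i -> i < k1 * k2.
Proof.
move=> _ /decode_col [[a' [j [i' [_ ha hj hc ->]]]]|[b [i' [jj [_ hb hi hc ->]]]]].
- by apply: mulD_lt => //; exact: Hc1 hc.
- by apply: mulD_lt => //; exact: Hc2 hc.
Qed.

Lemma valid_oc v e : List.In e (o_edges (oc v)) -> entry_valid G id oc (r1 + r2).+1 v e.
Proof.
rewrite Hed => /InP /mem_cedges [[u hu ->]|[x [hx ->]]|[e1 [j1 [j2 [he1 h1 h2 ->]]]]|[e1 [j1 [j2 [he1 h1 h2 ->]]]]].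
- split; first exact: Hm0.
  move: hu; rewrite nblP => /existsP [w /andP [hw /eqP Ew]].
  exists w; split => //; first exact: Hm0.
  by exists [:: w]; split => //=; rewrite ?hw ?Ew.
- split; first exact: Hm0.
  exists v; split => //; first by rewrite Hm ltnS; case/andP: hx.
  by exists [::].
- case: (Hv1 (proj2 (InP _ _) he1)) => hs [w [Ew ht [ps [P1 P2 P3 P4]]]].
  rewrite Hk2 in h1 h2.
  split => /=; first by rewrite Hm Hmof HL; apply: encS_lt => //; lia.
  exists w; split => //; first by rewrite Hm Hmof HL; apply: encS_lt => //; lia.
  by exists ps; split => //; lia.
- case: (Hv2 (proj2 (InP _ _) he1)) => hs [w [Ew ht [ps [P1 P2 P3 P4]]]].
  rewrite Hk1 in h1 h2.
  split => /=; first by rewrite Hm Hmof HL; apply: encT_lt => //; lia.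
  exists w; split => //; first by rewrite Hm Hmof HL; apply: encT_lt => //; lia.
  by exists ps; split => //; lia.
Qed.

Lemma oddS L' a j : odd (encS L' a j).
Proof. by rewrite /encS addn1 /= oddM. Qed.
Lemma oddT L' a j : ~~ odd (encT L' a j).
Proof. by rewrite /encT addn2 /= oddM. Qed.

Lemma MIS_fwd1 : MIS (target G id o1 k1) k1 -> MIS (target G id oc (k1 * k2)) (k1 * k2).
Proof.
move/MIS_target => [_ [f1 [hc1 hn1]]]; apply/MIS_target; split; first by rewrite muln_gt0 k1p.
have hi (c : 'I_(k1 * k2)) : c %/ k2 < k1 by rewrite ltn_divLR // ltn_ord.
have hj (c : 'I_(k1 * k2)) : c %% k2 < k2 by rewrite ltn_pmod.
pose x1 c := f1 (Ordinal (hi c)).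
have hb c : encS L (tagged (x1 c)) (c %% k2) < o_m (oc (tag (x1 c))).
  rewrite Hm Hmof; apply: encS_lt; [exact: ltn_ord | move: (hj c); lia].
exists (fun c => existT (fun v => 'I_(o_m (oc v))) (tag (x1 c)) (Ordinal (hb c))).
split.
- move=> c /=; rewrite Hcol -(HL (tag (x1 c))) ccolS; last by rewrite HL; move: (hj c); lia.
  rewrite Hk2 ltn_ord hj /=; move: (hc1 (Ordinal (hi c))) => /eqP; rewrite -/(x1 c) => -> /=.
  by rewrite -divn_eq.
- move=> c c' hcc' /=.
  rewrite (@tadjS _ _ (x1 c) (x1 c') _ _ (hj c) (hj c')) //.
  case: (eqVneq (Ordinal (hi c)) (Ordinal (hi c'))) => E; last exact: hn1.
  rewrite /x1 E; case: Hw1 => _ _ irr _ _.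
  by move: (irr (f1 (Ordinal (hi c')))) => /= ->.
Qed.

Lemma MIS_fwd2 : MIS (target G id o2 k2) k2 -> MIS (target G id oc (k1 * k2)) (k1 * k2).
Proof.
move/MIS_target => [_ [f2 [hc2 hn2]]]; apply/MIS_target; split; first by rewrite muln_gt0 k1p.
have hi (c : 'I_(k1 * k2)) : c %/ k2 < k1 by rewrite ltn_divLR // ltn_ord.
have hj (c : 'I_(k1 * k2)) : c %% k2 < k2 by rewrite ltn_pmod.
pose x2 c := f2 (Ordinal (hj c)).
have hb c : encT L (tagged (x2 c)) (c %/ k2) < o_m (oc (tag (x2 c))).
  rewrite Hm Hmof; apply: encT_lt; [exact: ltn_ord | move: (hi c); lia].
exists (fun c => existT (fun v => 'I_(o_m (oc v))) (tag (x2 c)) (Ordinal (hb c))).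
split.
- move=> c /=; rewrite Hcol -(HL (tag (x2 c))) ccolT; last by rewrite HL; move: (hi c); lia.
  rewrite Hk1 Hk2 ltn_ord hi /=; move: (hc2 (Ordinal (hj c))) => /eqP; rewrite -/(x2 c) => -> /=.
  by rewrite -divn_eq.
- move=> c c' hcc' /=.
  rewrite (@tadjT _ _ (x2 c) (x2 c') _ _ (hi c) (hi c')) //.
  case: (eqVneq (Ordinal (hj c)) (Ordinal (hj c'))) => E; last exact: hn2.
  rewrite /x2 E; case: Hw2 => _ _ irr _ _.
  by move: (irr (f2 (Ordinal (hj c')))) => /= ->.
Qed.

Lemma MIS_bwd : MIS (target G id oc (k1 * k2)) (k1 * k2) ->
  MIS (target G id o1 k1) k1 \/ MIS (target G id o2 k2) k2.
Proof.
move/MIS_target => [_ [f [hc hn]]].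
have hg (i : 'I_k1) (j : 'I_k2) : i * k2 + j < k1 * k2 := mulD_lt (ltn_ord i) (ltn_ord j).
pose g i j := Ordinal (hg i j).
have gneq i j i' j' : i != i' -> g i j != g i' j'.
  move=> hii; apply/eqP => /(congr1 val) /= /(mulD_inj (ltn_ord j) (ltn_ord j')) [E _].
  by move: hii; rewrite (val_inj E) eqxx.
case: (boolP [forall i : 'I_k1, [exists j : 'I_k2, odd (nat_of_ord (tagged (f (g i j))))]]) => HA.
- left; apply/MIS_target; split => //.
  have : forall i : 'I_k1, exists x1 : tV G o1, exists j : 'I_k2,
      [/\ tag (f (g i j)) = tag x1, nat_of_ord (tagged (f (g i j))) = encS L (tagged x1) j &
          o_col (o1 (tag x1)) (tagged x1) == Some (val i)].
    move=> i; move/forallP: HA => /(_ i) /existsP [j hR].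
    case/decode_col: (eqP (hc (g i j))) => [[a [j' [i' [EX ha hj' hc' Ec]]]]|[b [i' [jj [EX _ _ _ _]]]]];
      last by move: hR; rewrite EX (negbTE (oddT _ _ _)).
    case: (mulD_inj (ltn_ord j) hj' Ec) => Ei Ej.
    exists (existT (fun v => 'I_(o_m (o1 v))) (tag (f (g i j))) (Ordinal ha)), j.
    split => //=; first by rewrite Ej; exact: EX.
    by rewrite hc' Ei.
  case/fin_all_exists => f1 Hf1; exists f1; split.
  + by move=> i; case: (Hf1 i) => j [_ _ ->].
  + move=> i i' hii'; case: (Hf1 i) => j [T1 E1 _]; case: (Hf1 i') => j' [T2 E2 _].
    rewrite -(tadjS (ltn_ord j) (ltn_ord j') T1 T2 E1 E2).
    exact/hn/gneq.
- right; move/forallPn: HA => [i /existsPn HB]; apply/MIS_target; split => //.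
  have : forall j : 'I_k2, exists x2 : tV G o2,
      [/\ tag (f (g i j)) = tag x2, nat_of_ord (tagged (f (g i j))) = encT L (tagged x2) i &
          o_col (o2 (tag x2)) (tagged x2) == Some (val j)].
    move=> j; case/decode_col: (eqP (hc (g i j))) => [[a [j' [i' [EX _ _ _ _]]]]|[b [i' [jj [EX hb hi' hc' Ec]]]]].
      by move: (HB j); rewrite EX oddS.
    case: (mulD_inj (ltn_ord j) (Hc2 hb hc') Ec) => Ei Ej.
    exists (existT (fun v => 'I_(o_m (o2 v))) (tag (f (g i j))) (Ordinal hb)).
    split => //=; first by rewrite Ei; exact: EX.
    by rewrite hc' Ej.
  case/fin_all_exists => f2 Hf2; exists f2; split.
  + by move=> j; case: (Hf2 j) => [_ _ ->].
  + move=> j j' hjj'; case: (Hf2 j) => [T1 E1 _]; case: (Hf2 j') => [T2 E2 _].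
    rewrite -(tadjT (ltn_ord i) (ltn_ord i) T1 T2 E1 E2).
    apply: hn; apply/eqP => /(congr1 val) /= /(mulD_inj (ltn_ord j) (ltn_ord j')) [_ E].
    by move: hjj'; rewrite (val_inj E) eqxx.
Qed.

Lemma card_oc : #|tV G oc| = #|gV G| + 2 * L * (#|tV G o1| + #|tV G o2|).
Proof.
rewrite !card_tV.
have -> : \sum_(v : gV G) o_m (oc v) =
          \sum_(v : gV G) (2 * L * o_m (o1 v) + 2 * L * o_m (o2 v) + 1).
  by apply: eq_bigr => v _; rewrite Hm Hmof; nia.
rewrite !big_split /= sum1_card -!big_distrr /= mulnDr addnC; congr (_ + _).
by rewrite -mulnDr.
Qed.
End Multi.

Section Single.
Variables (s t : nat) (G : inst s t) (id : gV G -> nat).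
Hypotheses (wfG : wf_inst G) (Hn1 : #|gV G| <= 1).

Lemma MIS1_yes (o : gV G -> routput) k' (Hk : forall v, o_k (o v) = k')
  (Hw : wf_inst (target G id o k')) (Hc : #|tV G o| <= 1) v :
  MIS (target G id o k') k' <-> yes1 (o v).
Proof.
have Ev : forall w : gV G, w = v by move/fintype_le1P: Hn1 => H w; rewrite (H w) (H v).
have Ex : forall x y : tV G o, x = y by move/fintype_le1P: Hc => H x y; rewrite (H x) (H y).
rewrite MIS_target /yes1 Hk; split.
- case=> hk [f [hc _]].
  have k1 : k' = 1.
    case: k' f hc hk {Hk Hw} => [|[|k']] f hc hk //.
    move: (hc ord0) (hc (Ordinal (isT : 1 < k'.+2))); rewrite (Ex (f ord0) (f (Ordinal (isT : 1 < k'.+2)))).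
    by move/eqP => -> /eqP [].
  subst k'; rewrite eqxx /=.
  set x := f ord0; have h0 : 0 < o_m (o (tag x)) by apply: leq_ltn_trans (ltn_ord (tagged x)).
  have E0 := congr1 (fun y : tV G o => nat_of_ord (tagged y))
               (Ex x (existT (fun w => 'I_(o_m (o w))) (tag x) (Ordinal h0))).
  move: (hc ord0); rewrite -/x /= E0 /= (Ev (tag x)) => ->; done.
- case/andP => /eqP -> hc; split => //.
  case: Hw => h _ _ _ _; move/card_gt0P: h => [x0 _].
  have h0 : 0 < o_m (o v) by rewrite -(Ev (tag x0)); apply: leq_ltn_trans (ltn_ord (tagged x0)).
  exists (fun _ => existT (fun w => 'I_(o_m (o w))) v (Ordinal h0)); split.
    by move=> i; rewrite (ord1 i).
  by move=> i j; rewrite (ord1 i) (ord1 j) eqxx.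
Qed.

Variables (o1 o2 : gV G -> routput).

Lemma oc1 v : oc id o1 o2 v = ROutput 1 1 (fun _ => if yes1 (o1 v) || yes1 (o2 v) then Some 0 else None) [::].
Proof. by rewrite /oc /comb nbl_nil no_nbr. Qed.

Lemma card_oc1 : #|tV G (oc id o1 o2)| = #|gV G|.
Proof. by rewrite card_tV -sum1_card; apply: eq_bigr => v _; rewrite oc1. Qed.

Lemma wf_oc1 : wf_inst (target G id (oc id o1 o2) 1).
Proof.
have Ex : forall x y : tV G (oc id o1 o2), x = y.
  by move: Hn1; rewrite -card_oc1 => /fintype_le1P H x y; rewrite (H x) (H y).
have Hf : forall x y : tV G (oc id o1 o2), tadj G id (oc id o1 o2) x y = false.
  have He : forall v, o_edges (oc id o1 o2 v) = [::] by move=> v; rewrite oc1.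
  by move=> x y; rewrite tadjE !He.
split => //.
- by rewrite card_oc1; case: wfG.
- by move=> x y /=; rewrite !Hf.
- by move=> x /=; rewrite Hf.
- by move=> x y; rewrite (Ex x y) connect0.
Qed.
End Single.

Lemma arith n a b k1 k2 S1 S2 P1 P2 : 1 < n -> a <= n ^ S1 -> b <= n ^ S2 ->
  k1 <= P1 -> k2 <= P2 ->
  n + 2 * (k1 + k2) * (a + b) <= n ^ (S1 + S2 + 4 * (P1 + P2) + 2).
Proof.
move=> hn ha hb h1 h2.
have n0 : 0 < n by lia.
set X := n ^ (S1 + S2 + 1).
have hnX : n <= X by rewrite -{1}(expn1 n) leq_pexp2l //; lia.
have haX : a <= X by apply: leq_trans ha _; rewrite leq_pexp2l //; lia.
have hbX : b <= X by apply: leq_trans hb _; rewrite leq_pexp2l //; lia.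
have hP : 1 + 4 * (P1 + P2) < n ^ (1 + 4 * (P1 + P2)) by apply: ltn_expl.
have -> : n ^ (S1 + S2 + 4 * (P1 + P2) + 2) = n ^ (1 + 4 * (P1 + P2)) * X.
  by rewrite /X -expnD; congr (n ^ _); lia.
nia.
Qed.

Lemma le_pow m e : 0 < m -> 0 < e -> m <= m ^ e.
Proof. by move=> hm he; rewrite -{1}(expn1 m) leq_pexp2l. Qed.
Lemma le1 m e b : m = 1 -> b <= m ^ e -> b <= 1.
Proof. by move=> ->; rewrite exp1n. Qed.

Theorem mainTheorem12 (c s t : nat) (P1 P2 : problem s t) :
  0 < c ->
  local_reduces_to_MIS c P1 -> local_reduces_to_MIS c P2 ->
  local_reduces_to_MIS c (union_problem P1 P2).
Proof.
move=> c0 [fs1 [fr1 [ft1 [fp1 [cs1 cr1 ct1 cp1 [A1 HA1]]]]]]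
          [fs2 [fr2 [ft2 [fp2 [cs2 cr2 ct2 cp2 [A2 HA2]]]]]].
exists (fun k => fs1 k + fs2 k + 4 * (fp1 k + fp2 k) + 2), (fun k => fr1 k + fr2 k + 1),
  (fun k => ft1 k + ft2 k), (fun k => fp1 k * fp2 k).
split.
- apply: comp_add; last exact: comp_const.
  apply: comp_add; first exact: comp_add.
  by apply: comp_mul; [exact: comp_const | exact: comp_add].
- by apply: comp_add; [exact: comp_add | exact: comp_const].
- exact: comp_add.
- exact: comp_mul.
exists (calgo A1 A2 ft1 ft2 comb) => G k id wfG inj idb o.
pose o1 := fun v => a_out A1 (run A1 G id k (ft1 k) v).
pose o2 := fun v => a_out A2 (run A2 G id k (ft2 k) v).
have Eo : o = oc id o1 o2.
  by rewrite /o; apply: functional_extensionality => v; rewrite out_calgo.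
clearbody o; subst o.
move: (HA1 G k id wfG inj idb) => /= [k1 [Hk1 /andP [k1p k1le] Hc1 Hv1 [Hw1 Hcard1 HP1]]].
move: (HA2 G k id wfG inj idb) => /= [k2 [Hk2 /andP [k2p k2le] Hc2 Hv2 [Hw2 Hcard2 HP2]]].
rewrite -/o1 in Hk1 Hc1 Hv1 Hw1 Hcard1 HP1.
rewrite -/o2 in Hk2 Hc2 Hv2 Hw2 Hcard2 HP2.
case: (leqP #|gV G| 1) => hn.
- have n1 : #|gV G| = 1 by case: wfG => h0 _ _ _ _; lia.
  have [v0 _] : exists v0 : gV G, v0 \in gV G by apply/card_gt0P; rewrite n1.
  exists 1; split.
  + by move=> v; rewrite oc1.
  + by rewrite leqnn /= muln_gt0 (leq_trans k1p k1le) (leq_trans k2p k2le).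
  + by move=> v a i; rewrite oc1 /=; case: (yes1 (o1 v) || yes1 (o2 v)) => // _ [] <-.
  + by move=> v e; rewrite oc1.
  + split.
    * exact: wf_oc1.
    * rewrite card_oc1 //; apply: (le_pow (m:=#|gV G|)); [by case: wfG | lia].
    * have Hc1' : #|tV G o1| <= 1 by exact: (le1 n1 Hcard1).
      have Hc2' : #|tV G o2| <= 1 by exact: (le1 n1 Hcard2).
      have Hc : #|tV G (oc id o1 o2)| <= 1 by rewrite card_oc1 //; apply: (le1 (e:=0) n1).
      have Y1 := MIS1_yes hn Hk1 Hw1 Hc1' v0.
      have Y2 := MIS1_yes hn Hk2 Hw2 Hc2' v0.
      have Hkc : forall v, o_k (oc id o1 o2 v) = 1 by move=> v; rewrite oc1.
      have Y := MIS1_yes hn Hkc (wf_oc1 id wfG hn o1 o2) Hc v0.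
      have Yc : yes1 (oc id o1 o2 v0) = yes1 (o1 v0) || yes1 (o2 v0).
        by rewrite oc1; set b := (yes1 (o1 v0) || yes1 (o2 v0)); rewrite /yes1 /=; case: b.
      rewrite Yc in Y.
      rewrite /union_problem; split.
      - by case=> [/HP1/Y1|/HP2/Y2] h; apply/Y; rewrite h ?orbT.
      - by move/Y/orP => [/Y1/HP1|/Y2/HP2]; [left|right].
- exists (k1 * k2); split.
  + exact: Hk.
  + by rewrite muln_gt0 k1p k2p /=; apply: leq_mul.
  + exact: col_oc.
  + by move=> v e; rewrite addn1; apply: (valid_oc wfG hn Hk1 k1p Hv1 Hk2 k2p Hv2).
  + split.
    * exact: (wf_oc wfG inj hn Hk1 k1p Hv1 Hw1 k2p Hv2 Hw2).
    * rewrite (card_oc id wfG hn Hk1 k1p Hk2 k2p).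
      exact: arith.
    * rewrite /union_problem; split.
        by case=> [/HP1|/HP2]; [exact: MIS_fwd1 | exact: MIS_fwd2].
      by move/MIS_bwd => H; case: H => // [/HP1|/HP2]; [left|right].
Qed.
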